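(* Let $f\in\mathfrak{D}$ have degree $j$ and $A=R/\operatorname{Ann}_R f$. For all integers $a\ge 0$ and $i$ there are $\mathsf{k}$-vector space isomorphisms $$Q_A(a)_i\cong\frac{(\mathfrak{m}^{\,i}\circ f)_{\le j-a-i}}{(\mathfrak{m}^{\,i}\circ f)_{\le j-a-1-i}+(\mathfrak{m}^{\,i+1}\circ f)_{\le j-a-i}},$$ and $$Q_A^\vee(a)_i\cong\frac{(\mathfrak{m}^{\,j-a-i}\circ f)_{\le i}}{(\mathfrak{m}^{\,j-a-i}\circ f)_{\le i-1}+(\mathfrak{m}^{\,j+1-a-i}\circ f)_{\le i}}.$$
   Context: Let $\mathsf{k}$ be a field, $R=\mathsf{k}\{x_1,\ldots,x_r\}$ the formal power series ring with maximal ideal $\mathfrak{m}=\mathfrak{m}_R$, and $\mathfrak{D}=\mathsf{k}_{DP}[X_1,\ldots,X_r]$ the divided power algebra, on which $R$ acts by contraction ($x^{\alpha}\circ X^{[\beta]}=X^{[\beta-\alpha]}$ if $\beta\ge\alpha$ componentwise, $0$ otherwise). For $f\in\mathfrak{D}$ of degree $j$, $A=R/\operatorname{Ann}_R f$ is Artinian Gorenstein of socle degree $j$ with maximal ideal $\mathfrak{m}_A$. Notation: $\mathfrak{m}^{\,s}\circ f=\{\varphi\circ f:\varphi\in\mathfrak{m}^s\}$, and for a subspace $V\subseteq\mathfrak{D}$, $V_{\le t}=V\cap\mathfrak{D}_{\le t}$ (elements of degree at most $t$). The ideal $C_A(a)$ of $A^*=\bigoplus_i\mathfrak{m}_A^i/\mathfrak{m}_A^{i+1}$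 has degree-$i$ part equal to the image in $\mathfrak{m}_A^i/\mathfrak{m}_A^{i+1}$ of $\mathfrak{m}_A^i\cap(0:\mathfrak{m}_A^{\,j+1-a-i})$, and $Q_A(a)=C_A(a)/C_A(a+1)$. The dual $Q_A^\vee(a)$ is graded so that $Q_A^\vee(a)_i=\operatorname{Hom}_{\mathsf{k}}(Q_A(a)_{j-a-i},\mathsf{k})$ (the pairing $Q_A(a)_i\times Q_A(a)_{j-a-i}\to\mathsf{k}$ induced by $(h,h')\mapsto (hh'\circ f)(0)$ is exact). *)

(* Defs.v *)
From HB Require Import structures.
From mathcomp Require Import all_boot all_order all_algebra.
From mathcomp Require Import mpoly.
Set Implicit Arguments. Unset Strict Implicit. Unset Printing Implicit Defensive.
Import Order.TTheory GRing.Theory Num.Theory.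
Local Open Scope ring_scope.

(* R = k{x_1,...,x_r}: formal power series, i.e. arbitrary coefficient       *)
(* functions on monomials x^alpha, alpha : 'X_{1..r}.                        *)
Definition pseries (k : fieldType) (r : nat) := 'X_{1..r} -> k.

Section Defs.
Variables (k : fieldType) (r : nat).
Local Notation R := (pseries k r).
(* D = k_DP[X_1..X_r], as a k-vector space: the divided power monomial       *)
(* X^[beta] is represented by the monomial 'X_[beta] of {mpoly k[r]}; only    *)
(* the vector space structure, the degree and the contraction action are      *)
(* used (never the product of D).                                            *)
Local Notation D := {mpoly k[r]}.

Definition ps_add (p q : R) : R := fun m => p m + q m.
Definition ps_scale (c : k) (p : R) : R := fun m => c * p m.
Definition ps_mul (p q : R) : R := fun m =>
  \sum_(g : 'X_{1..r < (mdeg m).+1} | ((g : 'X_{1..r}) <= m)%MM)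
     p g * q (m - g)%MM.

(* contraction: x^a o X^[b] = X^[b-a] if b >= a, 0 otherwise, extended      *)
(* linearly in both arguments (well defined since F has finite support):    *)
Definition contract (p : R) (F : D) : D :=
  \sum_(b <- msupp F) F@_b *:
     \sum_(g : 'X_{1..r < (mdeg b).+1} | ((g : 'X_{1..r}) <= b)%MM)
        p (b - g)%MM *: 'X_[(g : 'X_{1..r})].

Definition Ann (f : D) (p : R) : Prop := contract p f = 0.

(* m^s (s : int; m^s = R for s <= 0): series with no term of degree < s *)
Definition mpow (s : int) (p : R) : Prop :=
  forall m : 'X_{1..r}, ((mdeg m)%:Z < s)%R -> p m = 0.

Definition dle (t : int) (F : D) : Prop :=
  forall m, m \in msupp F -> ((mdeg m)%:Z <= t)%R.

Definition mcf (f : D) (s t : int) (F : D) : Prop :=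
  (exists p, mpow s p /\ F = contract p f) /\ dle t F.

(* ---- Objects of A = R / Ann_R f, described by their preimages in R ---- *)
Definition mApow (f : D) (s : int) (p : R) : Prop :=
  exists q, mpow s q /\ Ann f (ps_add p (ps_scale (-1) q)).
Definition annA (f : D) (s : int) (p : R) : Prop :=
  forall q, mpow s q -> Ann f (ps_mul p q).
(* preimage in R of the lift to m_A^i of C_A(a)_i, i.e. of
   (m_A^i \cap (0 : m_A^{j+1-a-i})) + m_A^{i+1} *)
Definition CApre (f : D) (j : nat) (a : int) (i : int) (p : R) : Prop :=
  exists u v, [/\ mApow f i u, annA f (j%:Z + 1 - a - i) u,
                  mApow f (i + 1) v & p = ps_add u v].

(* U/V ~= W/W' (k-linear isomorphism), for subspaces V <= U of R and
   W' <= W of D: there is a map, k-linear on U, sending U into W, with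
   U -> W/W' onto and with kernel exactly V. *)
Definition quot_iso (U V : R -> Prop) (W W' : D -> Prop) : Prop :=
  exists Phi : R -> D,
  [/\ forall c u v, U u -> U v ->
        Phi (ps_add (ps_scale c u) v) = c *: Phi u + Phi v,
      forall u, U u -> W (Phi u),
      forall w, W w -> exists2 u, U u & W' (w - Phi u)
    & forall u, U u -> (W' (Phi u) <-> V u)].

(* k-linear functionals on U vanishing on V, i.e. Hom_k(U/V, k) *)
Definition dual_elt (U V : R -> Prop) (l : R -> k) : Prop :=
  (forall c u v, U u -> U v -> l (ps_add (ps_scale c u) v) = c * l u + l v)
  /\ (forall v, V v -> l v = 0).

(* Hom_k(U/V, k) ~= W/W' : a map Psi : W -> Hom_k(U/V,k), k-linear, onto,
   with kernel exactly W'. *)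
Definition dual_quot_iso (U V : R -> Prop) (W W' : D -> Prop) : Prop :=
  exists Psi : D -> R -> k,
  [/\ forall w, W w -> dual_elt U V (Psi w),
      forall c w w' u, W w -> W w' -> U u ->
        Psi (c *: w + w') u = c * Psi w u + Psi w' u,
      forall w, W w -> ((forall u, U u -> Psi w u = 0) <-> W' w)
    & forall l, dual_elt U V l -> exists2 w, W w & forall u, U u -> Psi w u = l u].

End Defs.

(* Main.v *)
Require Import Defs.
From HB Require Import structures.
From mathcomp Require Import all_boot all_order all_algebra.
From mathcomp Require Import mpoly.
From mathcomp Require Import zify ring.
From mathcomp.multinomials Require Import ssrcomplements.
From Stdlib Require Import Classical FunctionalExtensionality.
Set Implicit Arguments. Unset Strict Implicit. Unset Printing Implicit Defensive.
Import Order.TTheory GRing.Theory Num.Theory.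
Local Open Scope ring_scope.

Section Contr.
Variables (k : fieldType) (r : nat).
Local Notation R := (pseries k r).
Local Notation D := {mpoly k[r]}.
Implicit Types (p q : R) (F G : D).

Lemma mdeg_lem (m1 m2 : 'X_{1..r}) : (m1 <= m2)%MM -> (mdeg m1 <= mdeg m2)%N.
Proof.
move=> /mnm_lepP h; rewrite !mdegE; apply: leq_sum => i _; exact: h.
Qed.

Definition Kc p (b : 'X_{1..r}) : D :=
  \sum_(g : 'X_{1..r < (mdeg b).+1} | ((g : 'X_{1..r}) <= b)%MM)
        p (b - g)%MM *: 'X_[(g : 'X_{1..r})].

Lemma Kc_coef p b h : (Kc p b)@_h = if (h <= b)%MM then p (b - h)%MM else 0.
Proof.
rewrite /Kc raddf_sum /=.
under eq_bigr => g _ do rewrite mcoeffZ mcoeffX.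
case: ifP => hb.
  have hd : (mdeg h < (mdeg b).+1)%N by rewrite ltnS mdeg_lem.
  rewrite (bigD1 (BMultinom hd)) //= eqxx mulr1 big1 ?addr0 // => g /andP[_ /negP ng].
  case: eqP => [e|]; last by rewrite mulr0.
  by case: ng; apply/eqP/val_inj.
rewrite big1 // => g gb; case: eqP => [e|]; last by rewrite mulr0.
by rewrite -e gb in hb.
Qed.

Lemma contractE p F n : (msize F <= n)%N ->
  contract p F = \sum_(b : 'X_{1..r < n}) F@_b *: Kc p b.
Proof.
move=> hn; rewrite /contract -/(Kc _ _).
pose I : subFinType _ := 'X_{1..r < n}.
rewrite (big_mksub I) /=; last first.
  by move=> x /msize_mdeg_lt /leq_trans; apply.
  by rewrite msupp_uniq.
by rewrite big_rmcond //= => i; move/memN_msupp_eq0 ->; rewrite scale0r.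
Qed.

Lemma contract_coef p F n h : (msize F <= n)%N ->
  (contract p F)@_h =
  \sum_(b : 'X_{1..r < n}) F@_b * (if (h <= b)%MM then p (b - h)%MM else 0).
Proof.
move=> hn; rewrite (contractE p hn) raddf_sum /=.
by apply: eq_bigr => b _; rewrite mcoeffZ Kc_coef.
Qed.

Lemma msize_le_coef G n : (forall m, (n <= mdeg m)%N -> G@_m = 0) -> (msize G <= n)%N.
Proof.
move=> h; rewrite msizeE; apply/bigmax_leqP_seq => m mG _.
rewrite ltnNge; apply/negP => /h; apply/eqP; by rewrite -mcoeff_msupp.
Qed.

Lemma msize_contract p F : (msize (contract p F) <= msize F)%N.
Proof.
apply: msize_le_coef => m hm; rewrite (contract_coef _ _ (leqnn _)).
apply: big1 => b _; case: ifP => hb; last by rewrite mulr0.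
have := mdeg_lem hb; have := bmdeg b => h1 h2.
have : (msize F < msize F)%N by apply: (leq_trans _ h1); rewrite ltnS; exact: leq_trans hm h2.
by rewrite ltnn.
Qed.

Lemma contract_add p q F : contract (ps_add p q) F = contract p F + contract q F.
Proof.
apply/mpolyP => h; rewrite mcoeffD !(contract_coef _ _ (leqnn _)) -big_split /=.
apply: eq_bigr => b _; rewrite -mulrDr; case: ifP => _ //; by rewrite addr0.
Qed.

Lemma contract_scale c p F : contract (ps_scale c p) F = c *: contract p F.
Proof.
apply/mpolyP => h; rewrite mcoeffZ !(contract_coef _ _ (leqnn _)) mulr_sumr.
apply: eq_bigr => b _; case: ifP => _ /=; rewrite /ps_scale ?mulr0 //.
by rewrite mulrCA.
Qed.

Lemma contract0 F : contract (fun _ => 0) F = 0.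
Proof.
apply/mpolyP => h; rewrite mcoeff0 (contract_coef _ _ (leqnn _)).
by apply: big1 => b _; case: ifP; rewrite mulr0.
Qed.

Section Bnd.
Variable n : nat.

Definition iota (b g : 'X_{1..r < n}) : 'X_{1..r < n} :=
  if ((g : 'X_{1..r}) <= b)%MM then BMultinom (leq_ltn_trans (mdegB b g) (bmdeg b))
  else g.

Lemma iotaE b g : (val (iota b g) : 'X_{1..r}) =
   if ((g : 'X_{1..r}) <= b)%MM then (b - g)%MM else g.
Proof. by rewrite /iota; case: ifP. Qed.

Lemma iotaK b : involutive (iota b).
Proof.
move=> g; apply: val_inj => /=; rewrite iotaE (iotaE b g).
case hg: ((g : 'X_{1..r}) <= b)%MM; last by rewrite hg.
rewrite lem_subr; apply/mnmP => i; rewrite !mnmBE.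
move/mnm_lepP: hg => /(_ i); lia.
Qed.

End Bnd.

Section Assoc.
Implicit Types (b g h : 'X_{1..r}).

Lemma mlem1 g b : (g <= b)%MM -> (b - (b - g))%MM = g.
Proof. move/mnm_lepP => H; apply/mnmP => i; rewrite !mnmBE; have := H i; lia. Qed.

Lemma mlem2 g b h : (g <= b)%MM -> (h <= b)%MM -> ((h <= b - g)%MM = (g <= b - h)%MM).
Proof.
move/mnm_lepP => H1 /mnm_lepP H2; apply/idP/idP => /mnm_lepP H; apply/mnm_lepP => i;
  have := H1 i; have := H2 i; have := H i; rewrite !mnmBE; lia.
Qed.

Lemma mlem3 b g h : (b - g - h)%MM = (b - h - g)%MM.
Proof. apply/mnmP => i; rewrite !mnmBE; lia. Qed.

Lemma widen_sum n c (phi : 'X_{1..r} -> k) : (mdeg c < n)%N ->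
  \sum_(g : 'X_{1..r < (mdeg c).+1} | ((g : 'X_{1..r}) <= c)%MM) phi g =
  \sum_(g : 'X_{1..r < n}) (if ((g : 'X_{1..r}) <= c)%MM then phi g else 0).
Proof.
move=> hc.
pose I : subFinType _ := 'X_{1..r < (mdeg c).+1}.
pose J : subFinType _ := 'X_{1..r < n}.
rewrite (big_sub_widen I J (fun g => (g <= c)%MM) phi); last first.
  by move=> x /= hx; apply: leq_trans hc.
rewrite big_mkcond /=; apply: eq_bigr => g _.
case hg: ((g : 'X_{1..r}) <= c)%MM => //=.
by rewrite ltnS mdeg_lem.
Qed.

Lemma mul_inner n p q (b : 'X_{1..r < n}) h :
  (if (h <= b)%MM then ps_mul p q (b - h)%MM else 0) =
  \sum_(b' : 'X_{1..r < n})
     (if ((b' : 'X_{1..r}) <= b)%MM then p (b - b')%MM else 0) *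
     (if (h <= b')%MM then q (b' - h)%MM else 0).
Proof.
case hb: (h <= b)%MM; last first.
  apply/esym/big1 => b' _; case hb1: ((b' : 'X_{1..r}) <= b)%MM; last by rewrite mul0r.
  case hb2: (h <= b')%MM; last by rewrite mulr0.
  by rewrite (lepm_trans hb2 hb1) in hb.
rewrite /ps_mul (@widen_sum n (b - h)%MM (fun g => p g * q (b - h - g)%MM)); last by apply: leq_ltn_trans (mdegB _ _) (bmdeg b).
rewrite [RHS](reindex_inj (inv_inj (iotaK b))) /=.
apply: eq_bigr => g _; rewrite iotaE.
case hg: ((g : 'X_{1..r}) <= b)%MM; last first.
  rewrite hg mul0r; case: ifP => // hg2.
  by rewrite (lepm_trans hg2 (lem_subr _ _)) in hg.
rewrite lem_subr mlem1 // (mlem2 hg hb) mlem3.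
by case: ifP; rewrite ?mulr0.
Qed.

Lemma contract_mul p q F : contract (ps_mul p q) F = contract q (contract p F).
Proof.
apply/mpolyP => h.
rewrite (contract_coef _ _ (leqnn (msize F))) (contract_coef _ _ (msize_contract p F)).
under [RHS]eq_bigr => b' _ do rewrite (contract_coef _ _ (leqnn _)) mulr_suml.
rewrite exchange_big /=; apply: eq_bigr => b _.
rewrite mul_inner mulr_sumr; apply: eq_bigr => b' _; by rewrite mulrA.
Qed.

End Assoc.

Lemma lem0 (b : 'X_{1..r}) : (0%MM <= b)%MM.
Proof. by apply/mnm_lepP => i; rewrite mnmE. Qed.

Lemma kill_iff G (t : int) :
  (forall q, mpow t q -> contract q G = 0) <-> dle (t - 1) G.
Proof.
split=> [H m mG | H q hq].
  case: (boolP ((mdeg m)%:Z <= t - 1)%R) => // hm.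
  pose q : R := fun x => if x == m then 1 else 0.
  have hq : mpow t q.
    move=> x hx; rewrite /q; case: eqP => // e; subst x.
    by move: hm hx; rewrite -ltNge; lia.
  have /(congr1 (mcoeff 0%MM)) := H q hq.
  rewrite mcoeff0 (contract_coef _ _ (leqnn _)).
  have hd : (mdeg m < msize G)%N by apply: msize_mdeg_lt.
  rewrite (bigD1 (BMultinom hd)) //= big1 ?addr0.
    rewrite lem0 subm0 /q eqxx mulr1 => e.
    by move: mG; rewrite mcoeff_msupp e eqxx.
  move=> b /negP nb; rewrite lem0 subm0 /q; case: eqP; rewrite ?mulr0 // => e.
  by case: nb; apply/eqP/val_inj.
apply/mpolyP => h; rewrite mcoeff0 (contract_coef _ _ (leqnn _)).
apply: big1 => b _; case: (boolP ((b : 'X_{1..r}) \in msupp G)) => bG; last first.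
  by rewrite memN_msupp_eq0 // mul0r.
case: ifP; rewrite ?mulr0 // => hb.
rewrite hq ?mulr0 //.
have := H _ bG; have := mdegB b h; lia.
Qed.

End Contr.


Lemma vs_of_pred (K : fieldType) (vT : vectType K) (P : vT -> Prop) :
  P 0 -> (forall c u v, P u -> P v -> P (c *: u + v)) ->
  exists S : {vspace vT}, forall v, v \in S <-> P v.
Proof.
move=> P0 Pl.
suff: forall n (S : {vspace vT}), (\dim {:vT} - \dim S <= n)%N ->
    (forall v, v \in S -> P v) -> exists S' : {vspace vT}, forall v, v \in S' <-> P v.
  move/(_ (\dim {:vT}) 0%VS); apply; first exact: leq_subr.
  by move=> v; rewrite memv0 => /eqP ->.
elim=> [|n IH] S hS SP.
  exists S => v; split; first exact: SP.
  move=> _; have := dimv_leqif_sup (subvf S); case=> _ e.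
  have h1 := dimvS (subvf S).
  have : (\dim S == \dim {:vT}) by apply/eqP; lia.
  by rewrite e => /subvP; apply; rewrite memvf.
case: (classic (exists v, P v /\ v \notin S)) => [[v [Pv nS]]|nex]; last first.
  exists S => v; split; first exact: SP.
  move=> Pv; apply/negPn/negP => nS; apply: nex; by exists v.
have sS : (S <= S + <[v]>)%VS by apply: addvSl.
have lt : (\dim S < \dim (S + <[v]>))%N.
  have := dimv_leqif_sup sS; case=> le e; rewrite ltn_neqAle le andbT e.
  apply/negP => /subvP H; have := H _ (memv_add (mem0v S) (memv_line v)).
  by rewrite add0r (negbTE nS).
apply: (IH (S + <[v]>)%VS); first lia.
move=> x /memv_addP [u Su [y /vlineP [c ->] ->]].
rewrite addrC; apply: Pl => //; exact: SP.
Qed.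

Section Emb.
Variables (k : fieldType) (r : nat) (j : nat).
Local Notation R := (pseries k r).
Local Notation D := {mpoly k[r]}.
Local Notation M := 'X_{1..r < j.+1}.
Definition E := {ffun M -> k^o}.

Definition emb (G : D) : E := [ffun m : M => (G@_(m : 'X_{1..r}) : k^o)].
Definition unemb (e : E) : D := \sum_(m : M) (e m : k) *: 'X_[(m : 'X_{1..r})].
Definition Bj (G : D) := (msize G <= j.+1)%N.

Lemma embL c G H : emb (c *: G + H) = c *: emb G + emb H.
Proof. by apply/ffunP => m; rewrite !ffunE mcoeffD mcoeffZ. Qed.

Lemma emb0 : emb 0 = 0.
Proof. by apply/ffunP => m; rewrite !ffunE mcoeff0. Qed.

Lemma unembL c e e' : unemb (c *: e + e') = c *: unemb e + unemb e'.
Proof.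
rewrite /unemb scaler_sumr -big_split /=; apply: eq_bigr => m _.
by rewrite !ffunE scalerA scalerDl.
Qed.

Lemma unemb_coef e (m : M) : (unemb e)@_(m : 'X_{1..r}) = e m.
Proof.
rewrite /unemb raddf_sum /= (bigD1 m) //= mcoeffZ mcoeffX eqxx mulr1 big1 ?addr0 //.
move=> m' /negP nm; rewrite mcoeffZ mcoeffX; case: eqP; rewrite ?mulr0 // => e'.
by case: nm; apply/eqP/val_inj.
Qed.

Lemma unembK e : emb (unemb e) = e.
Proof. by apply/ffunP => m; rewrite ffunE unemb_coef. Qed.

Lemma Bj_unemb e : Bj (unemb e).
Proof.
apply: msize_le_coef => m hm; rewrite /unemb raddf_sum /=; apply: big1 => m' _.
rewrite mcoeffZ mcoeffX; case: eqP; rewrite ?mulr0 // => e'.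
by have := bmdeg m'; rewrite e'; lia.
Qed.

Lemma embK G : Bj G -> unemb (emb G) = G.
Proof.
move=> hG; rewrite {2}(mpolywE hG) /unemb; apply: eq_bigr => m _; by rewrite ffunE.
Qed.

Lemma emb_inj G H : Bj G -> Bj H -> emb G = emb H -> G = H.
Proof. by move=> hG hH e; rewrite -(embK hG) -(embK hH) e. Qed.

End Emb.

Section F.
Variables (k : fieldType) (r : nat) (f : {mpoly k[r]}) (j : nat).
Hypothesis hdeg : msize f = j.+1.
Local Notation R := (pseries k r).
Local Notation D := {mpoly k[r]}.
Local Notation M := 'X_{1..r < j.+1}.
Local Notation E := (E k r j).
Local Notation Bj := (@Bj k r j).
Local Notation emb := (@emb k r j).
Local Notation unemb := (@unemb k r j).

Definition T (p : R) : E := emb (contract p f).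

Lemma Bj_contract p : Bj (contract p f).
Proof. by rewrite /Bj -hdeg msize_contract. Qed.

Lemma BjD G H : Bj G -> Bj H -> Bj (G + H).
Proof. rewrite /Bj => h1 h2; apply: leq_trans (msizeD_le _ _) _; by rewrite geq_max h1. Qed.

Lemma embD G H : emb (G + H) = emb G + emb H.
Proof. by have := @embL k r j 1 G H; rewrite !scale1r. Qed.

Lemma TL c p q : T (ps_add (ps_scale c p) q) = c *: T p + T q.
Proof. by rewrite /T contract_add contract_scale embL. Qed.

Lemma TD p q : T (ps_add p q) = T p + T q.
Proof. by rewrite /T contract_add embD. Qed.

Lemma TZ c p : T (ps_scale c p) = c *: T p.
Proof. rewrite /T contract_scale; have := @embL k r j c (contract p f) 0; by rewrite !addr0 emb0 addr0. Qed.

Lemma T0 : T (fun _ => 0) = 0.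
Proof. by rewrite /T contract0 emb0. Qed.

Definition DlP (S : {vspace E}) (t : int) :=
  forall e, e \in S <-> forall m : M, (t < (mdeg m)%:Z)%R -> e m = 0.
Definition MsP (S : {vspace E}) (s : int) :=
  forall e, e \in S <-> exists q, mpow s q /\ e = T q.

Lemma DlP_ex t : exists S, DlP S t.
Proof.
apply: vs_of_pred => [m _|c u v hu hv m hm]; first by rewrite ffunE.
by rewrite !ffunE hu // hv // ?scaler0 ?addr0.
Qed.

Lemma MsP_ex s : exists S, MsP S s.
Proof.
apply: vs_of_pred.
  exists (fun _ => 0); split; last by rewrite T0.
  by move=> m _.
move=> c u v [q1 [h1 ->]] [q2 [h2 ->]]; exists (ps_add (ps_scale c q1) q2); split.
  by move=> m hm; rewrite /ps_add /ps_scale h1 // h2 // mulr0 addr0.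
by rewrite TL.
Qed.

Lemma dle_emb G t S : DlP S t -> Bj G -> (dle t G <-> emb G \in S).
Proof.
move=> hS hG; rewrite hS; split.
  move=> hd m hm; rewrite ffunE; case: (boolP ((m : 'X_{1..r}) \in msupp G)) => mG.
    by have := hd _ mG; lia.
  exact: memN_msupp_eq0.
move=> H m mG; have hm : (mdeg m < j.+1)%N.
  by apply: leq_trans (msize_mdeg_lt mG) hG.
case: (boolP ((mdeg m)%:Z <= t)%R) => // hlt.
have := H (BMultinom hm); rewrite ffunE /= => H2.
move: mG; rewrite mcoeff_msupp H2 ?eqxx //; by move: hlt; rewrite -ltNge.
Qed.

Lemma mApow_char p s S : MsP S s -> (mApow f s p <-> T p \in S).
Proof.
move=> hS; rewrite hS; split.
  move=> [q [hq hA]]; exists q; split => //.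
  move: hA; rewrite /Ann contract_add contract_scale scaleN1r => /eqP.
  by rewrite subr_eq0 /T => /eqP ->.
move=> [q [hq e]]; exists q; split => //.
have e2 := emb_inj (Bj_contract p) (Bj_contract q) e.
by rewrite /Ann contract_add contract_scale scaleN1r e2 subrr.
Qed.

Lemma annA_char p s S : DlP S (s - 1) -> (annA f s p <-> T p \in S).
Proof.
move=> hS; rewrite -(dle_emb hS (Bj_contract p)) -kill_iff; split.
  by move=> H q hq; rewrite -contract_mul; apply: H.
by move=> H q hq; rewrite /Ann contract_mul; apply: H.
Qed.

Lemma mcf_char F s t SM SD : MsP SM s -> DlP SD t ->
  (mcf f s t F <-> Bj F /\ emb F \in (SM :&: SD)%VS).
Proof.
move=> hM hD; split.
  move=> [[p [hp ->]] hd]; split; first exact: Bj_contract.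
  apply/memv_capP; split; first by apply/hM; exists p.
  by apply/(dle_emb hD (Bj_contract p)).
move=> [hB /memv_capP [/hM [q [hq e]] hd]]; split.
  by exists q; split => //; apply: emb_inj hB (Bj_contract q) e.
by apply/(dle_emb hD hB).
Qed.

Lemma CApre_char p a i SMi SMi1 SD : MsP SMi i -> MsP SMi1 (i + 1) ->
  DlP SD (j%:Z + 1 - a - i - 1) ->
  (CApre f j a i p <-> T p \in (SMi :&: SD + SMi1)%VS).
Proof.
move=> h1 h2 hD; split.
  move=> [u [v [hu han hv ->]]]; rewrite TD; apply: memv_add.
    by apply/memv_capP; split; [apply/(mApow_char _ h1) | apply/(annA_char _ hD)].
  by apply/(mApow_char _ h2).
move=> /memv_addP [x /memv_capP [/h1 [q1 [hq1 ->]] hx] [z /h2 [q2 [hq2 ->]] e]].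
exists q1, (ps_add p (ps_scale (-1) q1)); split.
- by apply/(mApow_char _ h1)/h1; exists q1.
- by apply/(annA_char _ hD).
- apply/(mApow_char _ h2); rewrite TD TZ e scaleN1r addrAC subrr add0r.
  by apply/h2; exists q2.
- apply: functional_extensionality => m; rewrite /ps_add /ps_scale; ring.
Qed.

Lemma sum_char F s1 t1 s2 t2 SM1 SD1 SM2 SD2 :
  MsP SM1 s1 -> DlP SD1 t1 -> MsP SM2 s2 -> DlP SD2 t2 ->
  ((exists F1 F2, [/\ mcf f s1 t1 F1, mcf f s2 t2 F2 & F = F1 + F2]) <->
   Bj F /\ emb F \in (SM1 :&: SD1 + SM2 :&: SD2)%VS).
Proof.
move=> hM1 hD1 hM2 hD2; split.
  move=> [F1 [F2 [/(mcf_char _ hM1 hD1) [b1 i1] /(mcf_char _ hM2 hD2) [b2 i2] ->]]].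
  by split; [exact: BjD | rewrite embD; apply: memv_add].
move=> [hB /memv_addP [e1 i1 [e2 i2 e]]].
exists (unemb e1), (unemb e2); split.
- by apply/(mcf_char _ hM1 hD1); rewrite unembK; split => //; apply: Bj_unemb.
- by apply/(mcf_char _ hM2 hD2); rewrite unembK; split => //; apply: Bj_unemb.
- apply: (emb_inj hB); first by apply: BjD; apply: Bj_unemb.
  by rewrite embD !unembK.
Qed.

End F.

Lemma pi2_iff (K : fieldType) (vT : vectType K) (X X' Z : {vspace vT}) e :
  (X' <= X)%VS -> e \in (X + Z)%VS ->
  (addv_pi2 Z X e \in (X' + Z :&: X)%VS) = (e \in (X' + Z)%VS).
Proof.
move=> sX he.
have de : addv_pi1 Z X e + addv_pi2 Z X e = e by apply: addv_pi1_pi2; rewrite addvC.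
have p1Z : addv_pi1 Z X e \in Z by apply: memv_pi1.
apply/idP/idP.
  move/memv_addP => [x hx [y /memv_capP [hyZ _] e2]].
  have -> : e = x + (addv_pi1 Z X e + y) by rewrite -{1}de e2 addrCA.
  by apply: memv_add => //; apply: memvD.
move/memv_addP => [x hx [z hz ->]].
rewrite linearD /= addv_pi2_id; last by apply: (subvP sX).
apply: memv_add => //; apply/memv_capP; split; last exact: memv_pi2.
have dz : addv_pi1 Z X z + addv_pi2 Z X z = z.
  by apply: addv_pi1_pi2; apply: (subvP (addvSl _ _)).
have -> : addv_pi2 Z X z = z - addv_pi1 Z X z by rewrite -{2}dz addrC addKr.
by apply: memvB => //; apply: memv_pi1.
Qed.

Section Abs.
Variables (k : fieldType) (r : nat) (f : {mpoly k[r]}) (j : nat).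
Hypothesis hdeg : msize f = j.+1.
Local Notation R := (pseries k r).
Local Notation D := {mpoly k[r]}.
Local Notation E := (E k r j).
Local Notation Bj := (@Bj k r j).
Local Notation emb := (@emb k r j).
Local Notation unemb := (@unemb k r j).
Local Notation T := (T f j).

Lemma Bj0 : Bj 0.
Proof. by rewrite /Bj msize0. Qed.

Lemma partA (U V : R -> Prop) (W W' : D -> Prop) (X X' Z : {vspace E}) :
  (X' <= X)%VS -> (forall e, e \in X -> exists p, e = T p) ->
  (forall p, U p <-> T p \in (X + Z)%VS) -> (forall p, V p <-> T p \in (X' + Z)%VS) ->
  (forall w, W w <-> Bj w /\ emb w \in X) ->
  (forall w, W' w <-> Bj w /\ emb w \in (X' + Z :&: X)%VS) ->
  quot_iso U V W W'.
Proof.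
move=> sX hXT hU hV hW hW'.
exists (fun p => unemb (addv_pi2 Z X (T p))); split.
- by move=> c u v _ _; rewrite TL linearP unembL.
- by move=> u _; apply/hW; rewrite unembK; split; [apply: Bj_unemb | apply: memv_pi2].
- move=> w /hW [hB hx]; have [p e] := hXT _ hx.
  exists p.
    by apply/hU; rewrite -e; apply: (subvP (addvSl _ _)).
  rewrite -e addv_pi2_id // embK // subrr; apply/hW'; split; first exact: Bj0.
  by rewrite emb0 mem0v.
- move=> u /hU hu; rewrite hW' hV unembK pi2_iff //; split; first by case.
  by move=> h; split => //; apply: Bj_unemb.
Qed.

End Abs.

Section B.
Variables (k : fieldType) (r j : nat).
Local Notation R := (pseries k r).
Local Notation D := {mpoly k[r]}.
Local Notation E := (E k r j).
Local Notation Bj := (@Bj k r j).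
Local Notation emb := (@emb k r j).
Local Notation unemb := (@unemb k r j).

Definition ps_sum (I : Type) (s : seq I) (c : I -> k) (uk : I -> R) : R :=
  fun m => \sum_(i <- s) c i * uk i m.

Lemma lin_sum (V' : lmodType k) (U : R -> Prop) (Phi : R -> V') :
  U (fun _ => 0) -> (forall c u v, U u -> U v -> U (ps_add (ps_scale c u) v)) ->
  (forall c u v, U u -> U v -> Phi (ps_add (ps_scale c u) v) = c *: Phi u + Phi v) ->
  forall (I : Type) (s : seq I) c uk, (forall i, U (uk i)) ->
  U (ps_sum s c uk) /\ Phi (ps_sum s c uk) = \sum_(i <- s) c i *: Phi (uk i).
Proof.
move=> U0 Ucl PhiL I s c uk Uk; elim: s => [|i s [IH1 IH2]].
  have -> : ps_sum [::] c uk = (fun _ => 0).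
    by apply: functional_extensionality => m; rewrite /ps_sum big_nil.
  split => //; rewrite big_nil.
  have e : ps_add (ps_scale 1 (fun _ : 'X_{1..r} => 0 : k)) (fun _ => 0) = (fun _ => 0).
    by apply: functional_extensionality => m; rewrite /ps_add /ps_scale mulr0 addr0.
  have := PhiL 1 _ _ U0 U0; rewrite e scale1r => h.
  by apply: (addrI (Phi (fun _ => 0))); rewrite addr0 -h.
have -> : ps_sum (i :: s) c uk = ps_add (ps_scale (c i) (uk i)) (ps_sum s c uk).
  by apply: functional_extensionality => m; rewrite /ps_sum big_cons.
by split; [apply: Ucl | rewrite PhiL // IH2 big_cons].
Qed.

Lemma embB G H : emb (G - H) = emb G - emb H.
Proof. have := @embL k r j (-1) H G; rewrite !scaleN1r => e; by rewrite [G - H]addrC e [RHS]addrC. Qed.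

Lemma embS (I : Type) (s : seq I) (F : I -> D) :
  emb (\sum_(i <- s) F i) = \sum_(i <- s) emb (F i).
Proof.
apply: (big_morph _ _ (@emb0 k r j)) => G H.
by have := @embL k r j 1 G H; rewrite !scale1r.
Qed.

Lemma embZ c G : emb (c *: G) = c *: emb G.
Proof. by have := @embL k r j c G 0; rewrite !addr0 emb0 addr0. Qed.

Lemma partB (U V : R -> Prop) (W W' : D -> Prop) (SW SW' : {vspace E}) :
  quot_iso U V W W' -> U (fun _ => 0) ->
  (forall c u v, U u -> U v -> U (ps_add (ps_scale c u) v)) ->
  (forall v, V v -> U v) -> (SW' <= SW)%VS ->
  (forall w, W w <-> Bj w /\ emb w \in SW) ->
  (forall w, W' w <-> Bj w /\ emb w \in SW') ->
  dual_quot_iso U V W W'.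
Proof.
move=> [Phi [PhiL PhiW PhiS PhiK]] U0 Ucl VU sW hW hW'.
pose C := (SW :\: SW')%VS.
pose n := \dim C.
pose b := vbasis C.
pose pi := addv_pi1 SW SW'.
have bfree : free b := basis_free (vbasisP C).
have piC e : pi e \in C by apply: memv_pi.
have pi0 e : e \in SW' -> pi e = 0.
  move=> he; have := addv_pi1_pi2 (subvP (addvSr SW SW') _ he).
  rewrite addv_pi2_id // => h; apply: (addIr e); by rewrite add0r.
have piid c : c \in C -> pi c = c.
  by move=> hc; apply: daddv_pi_id => //; apply: capv_diff.
have piW' e : e \in SW -> pi e = 0 -> e \in SW'.
  move=> he h0; have := addv_pi1_pi2 (subvP (addvSl SW SW') _ he).
  rewrite -/pi h0 add0r => <-; exact: memv_pi2.
have bC (i : 'I_n) : b`_i \in C.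
  by apply: vbasis_mem; apply: mem_nth; rewrite size_tuple ltn_ord.
pose cf e (i : 'I_n) := coord b i (pi e).
have cfL i c e e' : cf (c *: e + e') i = c * cf e i + cf e' i.
  by rewrite /cf !linearP.
pose Psi w u := \sum_(i < n) cf (emb w) i * cf (emb (Phi u)) i.
have ex : forall i : 'I_n, exists u, U u /\ W' (unemb b`_i - Phi u).
  move=> i; have : W (unemb b`_i).
    apply/hW; rewrite unembK; split; first exact: Bj_unemb.
    exact: (subvP (diffvSl SW SW')).
  by move/PhiS => [u hu hw']; exists u.
have [uk Huk] := fin_all_exists ex.
have piuk (i : 'I_n) : pi (emb (Phi (uk i))) = b`_i.
  have [_ /hW' [_ h]] := Huk i; move: h; rewrite embB unembK => /pi0.
  rewrite linearB /= (piid _ (bC i)) => /eqP; rewrite subr_eq0 => /eqP <-.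
  by [].
have cfuk i i' : cf (emb (Phi (uk i))) i' = (i == i')%:R.
  by rewrite /cf piuk coord_free.
exists Psi; split.
- move=> w hw; split.
    move=> c u v hu hv; rewrite /Psi PhiL // embL mulr_sumr -big_split /=.
    by apply: eq_bigr => i _; rewrite cfL; ring.
  move=> v hv; have /hW' [_ h] := (PhiK v (VU v hv)).2 hv.
  by rewrite /Psi big1 // => i _; rewrite /cf (pi0 _ h) linear0 mulr0.
- move=> c w w' u hw hw' hu; rewrite /Psi mulr_sumr -big_split /=.
  by apply: eq_bigr => i _; rewrite embL cfL; ring.
- move=> w hw; have [hB hin] := (hW w).1 hw; split.
    move=> H; apply/hW'; split => //; apply: piW' => //.
    rewrite (coord_vbasis (piC (emb w))) big1 // => i _.
    have := H _ (Huk i).1; rewrite /Psi (bigD1 i) //= cfuk eqxx mulr1 big1 ?addr0.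
      by rewrite /cf => ->; rewrite scale0r.
    by move=> i' ne; rewrite cfuk eq_sym (negbTE ne) mulr0.
  move=> /hW' [_ h] u hu; rewrite /Psi big1 // => i _.
  by rewrite /cf pi0 // raddf0 mul0r.
- move=> l [lL lV].
  pose s := \sum_(i < n) l (uk i) *: b`_i.
  have sC : s \in C.
    by apply: memv_suml => i _; apply: memvZ.
  exists (unemb s).
    apply/hW; rewrite unembK; split; [exact: Bj_unemb | exact: (subvP (diffvSl SW SW') _ sC)].
  move=> u hu.
  have cfs i : cf (emb (unemb s)) i = l (uk i).
    by rewrite /cf unembK piid // coord_sum_free.
  pose c i := cf (emb (Phi u)) i.
  have [US PhiS'] := lin_sum U0 Ucl PhiL (index_enum 'I_n) c (fun i => (Huk i).1).
  have [_ lS] := lin_sum (V' := k^o) U0 Ucl lL (index_enum 'I_n) c (fun i => (Huk i).1).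
  pose u' := ps_add (ps_scale (-1) (ps_sum (index_enum 'I_n) c uk)) u.
  have Uu' : U u' by apply: Ucl.
  have Vu' : V u'.
    apply/(PhiK _ Uu')/hW'; have /hW [hB hin] := PhiW _ Uu'; split => //.
    apply: piW' => //.
    rewrite /u' PhiL // PhiS' embL embS linearD linearZ linear_sum /=.
    under eq_bigr => i _ do rewrite embZ linearZ /= piuk.
    have ePu : pi (emb (Phi u)) = \sum_(i < n) c i *: b`_i := coord_vbasis (piC _).
    by rewrite ePu scaleN1r addNr.
  have := lV _ Vu'; rewrite /u' lL // lS => h.
  rewrite /Psi; under eq_bigr => i _ do rewrite cfs.
  move/eqP: h; rewrite mulN1r addrC subr_eq0 => /eqP ->.
  by apply: eq_bigr => i _; rewrite mulrC.
Qed.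

End B.

Section Main.
Variables (k : fieldType) (r : nat) (f : {mpoly k[r]}) (j : nat).
Hypothesis hdeg : msize f = j.+1.
Local Notation E := (E k r j).
Local Notation Bj := (@Bj k r j).
Local Notation emb := (@emb k r j).
Local Notation T := (T f j).

Lemma setup (a : nat) (i t t1 s1 : int) :
  t = j%:Z - a%:Z - i -> t1 = j%:Z - a%:Z - 1 - i -> s1 = i + 1 ->
  exists X X' Z : {vspace E},
  [/\ (X' <= X)%VS, (forall e, e \in X -> exists p, e = T p),
      (forall p, CApre f j a%:Z i p <-> T p \in (X + Z)%VS),
      (forall p, CApre f j (a%:Z + 1) i p <-> T p \in (X' + Z)%VS) &
      (forall w, mcf f i t w <-> Bj w /\ emb w \in X) /\
      (forall w, (exists F1 F2,
       [/\ mcf f i t1 F1, mcf f s1 t F2 & w = F1 + F2]) <->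
         Bj w /\ emb w \in (X' + Z :&: X)%VS)].
Proof.
move=> ht ht1 hs1.
have [SMi hMi] := MsP_ex f j i.
have [SMi1 hMi1] := MsP_ex f j s1.
have [SDt hDt] := DlP_ex k r j t.
have [SDt1 hDt1] := DlP_ex k r j t1.
have sD : (SDt1 <= SDt)%VS.
  apply/subvP => e /hDt1 H; apply/hDt => m hm; apply: H; rewrite ht1; rewrite ht in hm; lia.
have sM : (SMi1 <= SMi)%VS.
  apply/subvP => e /hMi1 [q [hq ->]]; apply/hMi; exists q; split => // m hm.
  by apply: hq; rewrite hs1; lia.
exists (SMi :&: SDt)%VS, (SMi :&: SDt1)%VS, SMi1; split.
- by apply: capvS => //; apply: subv_refl.
- by move=> e /memv_capP [/hMi [q [_ ->]] _]; exists q.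
- move=> p; apply: (CApre_char hdeg p (SMi:=SMi) (SMi1:=SMi1) (SD:=SDt)) => //.
    by rewrite -hs1.
  by have -> : (j%:Z + 1 - a%:Z - i - 1) = t by rewrite ht; ring.
- move=> p; apply: (CApre_char hdeg p (SMi:=SMi) (SMi1:=SMi1) (SD:=SDt1)) => //.
    by rewrite -hs1.
  by have -> : (j%:Z + 1 - (a%:Z + 1) - i - 1) = t1 by rewrite ht1; ring.
split; first by move=> w; apply: (mcf_char hdeg).
- move=> w; rewrite (sum_char hdeg w hMi hDt1 hMi1 hDt).
  by rewrite capvA (capv_idPl sM).
Qed.

End Main.

Theorem lemma1p25 (k : fieldType) (r : nat) (f : {mpoly k[r]}) (j : nat)
  (hdeg : msize f = j.+1) (a : nat) (i : int) :
  (* Q_A(a)_i = C_A(a)_i / C_A(a+1)_i *)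
  quot_iso (CApre f j a%:Z i) (CApre f j (a%:Z + 1) i)
    (mcf f i (j%:Z - a%:Z - i))
    (fun F => exists F1 F2,
       [/\ mcf f i (j%:Z - a%:Z - 1 - i) F1,
           mcf f (i + 1) (j%:Z - a%:Z - i) F2 & F = F1 + F2])
  /\
  (* Q_A^v(a)_i = Hom_k(Q_A(a)_{j-a-i}, k) *)
  dual_quot_iso (CApre f j a%:Z (j%:Z - a%:Z - i))
    (CApre f j (a%:Z + 1) (j%:Z - a%:Z - i))
    (mcf f (j%:Z - a%:Z - i) i)
    (fun F => exists F1 F2,
       [/\ mcf f (j%:Z - a%:Z - i) (i - 1) F1,
           mcf f (j%:Z + 1 - a%:Z - i) i F2 & F = F1 + F2]).
Proof.
split.
  have [X [X' [Z [sX hXT hU hV [hW hW']]]]] :=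
    @setup k r f j hdeg a i (j%:Z - a%:Z - i) (j%:Z - a%:Z - 1 - i) (i + 1) erefl erefl erefl.
  exact: (partA sX hXT hU hV hW hW').
have e1 : i = j%:Z - a%:Z - (j%:Z - a%:Z - i) by ring.
have e2 : i - 1 = j%:Z - a%:Z - 1 - (j%:Z - a%:Z - i) by ring.
have e3 : j%:Z + 1 - a%:Z - i = (j%:Z - a%:Z - i) + 1 by ring.
have [X [X' [Z [sX hXT hU hV [hW hW']]]]] :=
  @setup k r f j hdeg a (j%:Z - a%:Z - i) i (i - 1) (j%:Z + 1 - a%:Z - i) e1 e2 e3.
apply: (partB (SW := X) (SW' := (X' + Z :&: X)%VS)) => //.
- exact: (partA sX hXT hU hV hW hW').
- by apply/hU; rewrite T0 mem0v.
- move=> c u v /hU hu /hU hv; apply/hU; rewrite TL; apply: memvD => //; exact: memvZ.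
- move=> v /hV hv; apply/hU; apply: (subvP (addvS sX (subvv Z))) => //.
- by rewrite subv_add sX capvSr.
Qed.
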